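(* Let $D$ be a product distribution on $\{0,1\}^n$ with $\mu_i=P(X_i=1)\in(0,1)$ and $\sigma_i=\sqrt{\mu_i(1-\mu_i)}$, and let $f(x)=\prod_{i\in T_1}x_i\prod_{j\in T_0}(1-x_j)$ with $T_0,T_1$ disjoint and $d=|T_0|+|T_1|$. Then, with respect to the basis $\phi_S(x)=\prod_{i\in S}\frac{x_i-\mu_i}{\sigma_i}$, $$L_1(f)=\prod_{i\in T_1}(\mu_i+\sigma_i)\prod_{j\in T_0}(1-\mu_j+\sigma_j)\le 1.21^d.$$
   Context: Fourier coefficients are $\hat f_S=\mathbb{E}_D[f(X)\phi_S(X)]$ and the spectral norm is $L_1(f)=\sum_{S\subseteq[n]}|\hat f_S|$. (This is the BN-induced basis for the BN with no edges.) *)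

(* Defs.v *)
From HB Require Import structures.
From mathcomp Require Import all_boot all_order all_algebra.
Set Implicit Arguments. Unset Strict Implicit. Unset Printing Implicit Defensive.
Import Order.TTheory GRing.Theory Num.Theory.
Local Open Scope ring_scope.

Section Defs.
Variables (R : rcfType) (n : nat).

Definition cube := {ffun 'I_n -> bool}.

Definition prodD (mu : 'I_n -> R) (x : cube) : R :=
  \prod_(i < n) (if x i then mu i else 1 - mu i).

Definition expD (mu : 'I_n -> R) (g : cube -> R) : R :=
  \sum_(x : cube) prodD mu x * g x.

Definition sigma (mu : 'I_n -> R) (i : 'I_n) : R :=
  Num.sqrt (mu i * (1 - mu i)).

Definition phi (mu : 'I_n -> R) (S : {set 'I_n}) (x : cube) : R :=
  \prod_(i in S) (((x i)%:R - mu i) / sigma mu i).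

Definition fourier (mu : 'I_n -> R) (g : cube -> R) (S : {set 'I_n}) : R :=
  expD mu (fun x => g x * phi mu S x).

Definition L1 (mu : 'I_n -> R) (g : cube -> R) : R :=
  \sum_(S : {set 'I_n}) `|fourier mu g S|.

Definition conj_fn (T0 T1 : {set 'I_n}) (x : cube) : R :=
  (\prod_(i in T1) (x i)%:R) * \prod_(j in T0) (1 - (x j)%:R).

End Defs.

(* Main.v *)
Require Import Defs.
From HB Require Import structures.
From mathcomp Require Import all_boot all_order all_algebra.
From mathcomp Require Import ring lra.
Import Order.TTheory GRing.Theory Num.Theory.
Local Open Scope ring_scope.

Lemma sum_sets (R : comNzRingType) (I : finType) (a b : I -> R) :
  \sum_(S : {set I}) \prod_i (if i \in S then a i else b i) = \prod_i (a i + b i).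
Proof.
transitivity (\prod_i \sum_(c : bool) (if c then a i else b i)).
  rewrite bigA_distr_bigA /=.
  rewrite (reindex (fun f : {ffun I -> bool} => [set i | f i])) /=.
    by apply: eq_bigr => f _; apply: eq_bigr => i _; rewrite inE.
  exists (fun S : {set I} => [ffun i => i \in S]) => x _.
    by apply/ffunP => i; rewrite ffunE inE.
  by apply/setP => i; rewrite inE ffunE.
by apply: eq_bigr => i _; rewrite big_bool.
Qed.

Lemma sum_cube (R : comNzRingType) (I : finType) (F : I -> bool -> R) :
  \sum_(x : {ffun I -> bool}) \prod_i F i (x i) = \prod_i (F i true + F i false).
Proof. by rewrite -bigA_distr_bigA; apply: eq_bigr => i _; rewrite big_bool. Qed.

Lemma bnd (R : rcfType) (m : R) : 0 < m < 1 -> m + Num.sqrt (m * (1 - m)) <= 121%:R/100%:R.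
Proof.
move=> /andP[h0 h1].
have hs : Num.sqrt (m * (1 - m)) <= 121%:R/100%:R - m.
  have hp : 0 <= 121%:R/100%:R - m.
    rewrite subr_ge0 (le_trans (ltW h1)) // ler_pdivlMr // mul1r ler_nat //.
  rewrite -(ger0_norm hp) -sqrtr_sqr ler_sqrt ?sqr_ge0 //.
  have := sqr_ge0 (m - 855%:R/1000%:R). rewrite expr2. nra.
lra.
Qed.

Section Main.
Variables (R : rcfType) (n : nat) (mu : 'I_n -> R) (T0 T1 : {set 'I_n}).

Definition Fc (S : {set 'I_n}) (i : 'I_n) (b : bool) : R :=
  (if b then mu i else 1 - mu i) *
  (((if i \in T1 then (b : nat)%:R else 1) * (if i \in T0 then 1 - (b : nat)%:R else 1)) *
   (if i \in S then ((b : nat)%:R - mu i) / sigma mu i else 1)).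

Lemma fourier_eq S :
  fourier mu (@conj_fn R n T0 T1) S = \prod_i (Fc S i true + Fc S i false).
Proof.
rewrite -sum_cube /fourier /expD; apply: eq_bigr => x _.
rewrite /prodD /conj_fn /phi (big_mkcond (mem T1)) (big_mkcond (mem T0)) (big_mkcond (mem S)) /=.
by rewrite -!big_split.
Qed.

Hypothesis hmu : forall i, 0 < mu i < 1.
Hypothesis hdisj : [disjoint T0 & T1].

Definition aa i := if (i \in T0) || (i \in T1) then sigma mu i else 0.
Definition bb i := if i \in T1 then mu i else if i \in T0 then 1 - mu i else 1.

Lemma abs_c S i : `|Fc S i true + Fc S i false| = if i \in S then aa i else bb i.
Proof.
have [h0 h1] := andP (hmu i).
have hs : 0 < sigma mu i by rewrite /sigma sqrtr_gt0; nra.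
have hs2 : sigma mu i ^+ 2 = mu i * (1 - mu i) by rewrite /sigma sqr_sqrtr //; nra.
have hsn : sigma mu i != 0 by rewrite gt_eqF.
have hd : ~~ ((i \in T0) && (i \in T1)).
  by apply/negP => /andP[a b]; move/disjointFr: hdisj => /(_ i a); rewrite b.
rewrite /Fc /aa /bb /=.
case: (i \in S); case: (i \in T1) hd; case: (i \in T0) => //= _;
  rewrite !(mul1r, mulr1, mul0r, mulr0, subr0, add0r, addr0, sub0r, subrr).
- have -> : mu i * ((1 - mu i) / sigma mu i) = sigma mu i.
    apply: (mulIf hsn); transitivity (mu i * (1 - mu i)); [by field | by rewrite -hs2 expr2].
  by rewrite ger0_norm // ltW.
- have -> : (1 - mu i) * (- mu i / sigma mu i) = - sigma mu i.
    apply: (mulIf hsn); transitivity (- (mu i * (1 - mu i))); [by field | by rewrite -hs2 expr2 mulNr].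
  by rewrite normrN ger0_norm // ltW.
- have -> : mu i * ((1 - mu i) / sigma mu i) + (1 - mu i) * (- mu i / sigma mu i) = 0.
    by field.
  by rewrite normr0.
- by rewrite ger0_norm // ltW.
- by rewrite ger0_norm //; lra.
- by rewrite addrC subrK normr1.
Qed.



End Main.

Theorem mainTheorem6 (R : rcfType) (n : nat) (mu : 'I_n -> R)
  (hmu : forall i, 0 < mu i < 1) (T0 T1 : {set 'I_n})
  (hdisj : [disjoint T0 & T1]) :
  L1 mu (@conj_fn R n T0 T1) =
    (\prod_(i in T1) (mu i + sigma mu i)) *
    (\prod_(j in T0) (1 - mu j + sigma mu j))
  /\ L1 mu (@conj_fn R n T0 T1) <= (121%:R / 100%:R) ^+ (#|T0| + #|T1|).
Proof.
have hL : L1 mu (@conj_fn R n T0 T1) = \prod_i (@aa R n mu T0 T1 i + @bb R n mu T0 T1 i).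
  rewrite /L1 -sum_sets; apply: eq_bigr => S _.
  rewrite fourier_eq normr_prod; apply: eq_bigr => i _; exact: abs_c.
have hE : L1 mu (@conj_fn R n T0 T1) =
    (\prod_(i in T1) (mu i + sigma mu i)) *
    (\prod_(j in T0) (1 - mu j + sigma mu j)).
  rewrite hL (big_mkcond (mem T1)) (big_mkcond (mem T0)) -big_split /=.
  apply: eq_bigr => i _; rewrite /aa /bb.
  have hd : ~~ ((i \in T0) && (i \in T1)).
    by apply/negP => /andP[a b]; move/disjointFr: hdisj => /(_ i a); rewrite b.
  case: (i \in T1) hd; case: (i \in T0) => //= _.
  - by rewrite mulr1 addrC.
  - by rewrite mul1r addrC.
  - by rewrite add0r mulr1.
split => //.
rewrite hE exprD mulrC.
have hb : forall i, 0 <= mu i + sigma mu i <= 121%:R / 100%:R.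
  move=> i; have [h0 h1] := andP (hmu i); rewrite bnd ?hmu // andbT.
  by rewrite addr_ge0 ?sqrtr_ge0 // ltW.
have hb0 : forall i, 0 <= 1 - mu i + sigma mu i <= 121%:R / 100%:R.
  move=> i; have [h0 h1] := andP (hmu i).
  have h : 0 < 1 - mu i < 1 by apply/andP; split; lra.
  have := @bnd R _ h; have -> : (1 - mu i) * (1 - (1 - mu i)) = mu i * (1 - mu i) by ring. rewrite /sigma => ->; rewrite andbT.
  by rewrite addr_ge0 ?sqrtr_ge0 // subr_ge0 ltW.
rewrite -!prodr_const; apply: ler_pM.
- by apply: prodr_ge0 => i _; case/andP: (hb0 i).
- by apply: prodr_ge0 => i _; case/andP: (hb i).
- by apply: ler_prod => i _; exact: hb0.
- by apply: ler_prod => i _; exact: hb.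
Qed.
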